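(* Define polynomials by $P_1(x)=x$, $Q_1(x)=1$, and for $m>1$, $P_m(x)=P_{m-1}(x)^2+Q_{m-1}(x)^2$ and $Q_m(x)=P_{m-1}(x)Q_{m-1}(x)$. For $m\ge1$ let $B_m$ be the $m\times m$ coloring matrix with entries $b_{ij}=1$ if $i\ge j$ and $b_{ij}=0$ if $i<j$, and let $F^{(m)}(x)=\sum_{n\ge1}t_{B_m}^{(m)}(n)x^n$. Then for every $m\ge1$, $$x^{2^{m-1}}\left(\frac{1}{\sqrt{x}}Q_{m+1}\!\left(\frac{F^{(m)}(x)}{\sqrt{x}}\right)-P_{m+1}\!\left(\frac{F^{(m)}(x)}{\sqrt{x}}\right)\right)=0,$$ where the left-hand side, expanded, is a polynomial expression in $x$ and $F^{(m)}(x)$.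
   Context: A plane tree is an unlabeled rooted tree in which the children of every vertex are linearly ordered. A coloring matrix is an $m\times m$ matrix $A=(a_{ij})$ with entries in $\{0,1\}$. An $A$-coloring of a plane tree assigns to each vertex a color in $\{1,\dots,m\}$ such that whenever a vertex of color $j$ is a child of a vertex of color $i$, $a_{ij}=1$. Let $t_A^{(i)}(n)$ be the number of pairs (plane tree with $n$ vertices, $A$-coloring of it) in which the root has color $i$. *)

(* Defs.v *)
From mathcomp Require Import all_boot all_order all_algebra.
Set Implicit Arguments. Unset Strict Implicit. Unset Printing Implicit Defensive.
Import Order.TTheory GRing.Theory Num.Theory.

(* A pair (plane tree, coloring) is the same thing as a plane tree whose
   vertices carry a color label: CNode c children, children ordered. *)
Inductive ctree : Type := CNode of nat & seq ctree.

Definition croot (T : ctree) : nat := let: CNode c _ := T in c.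

Fixpoint csize (T : ctree) : nat :=
  let: CNode _ ch := T in (sumn (map csize ch)).+1.

Fixpoint is_coloring (m : nat) (A : nat -> nat -> bool) (T : ctree) : bool :=
  let: CNode c ch := T in
  [&& 0 < c <= m & all (fun U => A c (croot U) && is_coloring m A U) ch].

Definition has_card (X : Type) (P : X -> Prop) (k : nat) : Prop :=
  exists f : 'I_k -> X, injective f /\ forall x, P x <-> exists i, f i = x.

Definition t_count (m : nat) (A : nat -> nat -> bool) (i n k : nat) : Prop :=
  has_card (fun T : ctree => [/\ is_coloring m A T, croot T = i & csize T = n]) k.

Definition Bmat (i j : nat) : bool := (j <= i)%N.

Local Open Scope ring_scope.
Fixpoint PQ (k : nat) : {poly int} * {poly int} :=
  match k with
  | 0 => ('X, 1)
  | k.+1 => let: (p, q) := PQ k in (p ^+ 2 + q ^+ 2, p * q)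
  end.
Definition Ppoly (m : nat) : {poly int} := (PQ m.-1).1.
Definition Qpoly (m : nat) : {poly int} := (PQ m.-1).2.

Definition series := nat -> int.
Definition sadd (a b : series) : series := fun n => a n + b n.
Definition ssub (a b : series) : series := fun n => a n - b n.
Definition smul (a b : series) : series :=
  fun n => \sum_(i < n.+1) a i * b (n - i)%N.
Definition sconst (c : int) : series := fun n => if n is 0%N then c else 0.
Definition svar : series := fun n => if n == 1%N then 1 else 0.
Definition spow (a : series) (k : nat) : series := iter k (smul a) (sconst 1).
Definition seval (p : {poly int}) (s : series) : series :=
  foldr (fun c acc => sadd (sconst c) (smul s acc)) (sconst 0) (polyseq p).

(* Square-root variable: we work in Z[[t]] with x = t^2, so sqrt x = t.
   Given F(x) = sum_n f n x^n, [sub_sq f] is F(t^2), and [div_t y] is y/t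
   (valid when y has zero constant term, which holds for y = F(t^2) since
   there is no tree with 0 vertices). *)
Definition sub_sq (f : nat -> nat) : series :=
  fun k => if odd k then 0 else (f k./2)%:Z.
Definition div_t (y : series) : series := fun k => y k.+1.

(* Main.v *)
Require Import Defs.
From HB Require Import structures.
From mathcomp Require Import all_boot all_order all_algebra.
From mathcomp Require Import boolp.
From mathcomp Require Import ring zify.
Set Implicit Arguments. Unset Strict Implicit. Unset Printing Implicit Defensive.
Import Order.TTheory GRing.Theory Num.Theory.
Local Open Scope ring_scope.

Record fps := FPS { coef : nat -> int }.
HB.instance Definition _ := gen_eqMixin fps.
HB.instance Definition _ := gen_choiceMixin fps.

Lemma fps_ext (a b : fps) : (forall n, coef a n = coef b n) -> a = b.
Proof. by case: a; case: b => fa fb /= H; congr FPS; apply: funext => n; rewrite H. Qed.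

Definition fadd (a b : fps) := FPS (sadd (coef a) (coef b)).
Definition fopp (a : fps) := FPS (fun n => - coef a n).
Definition fzero := FPS (sconst 0).
Lemma faddA : associative fadd. Proof. by move=> a b c; apply: fps_ext => n /=; rewrite /sadd addrA. Qed.
Lemma faddC : commutative fadd. Proof. by move=> a b; apply: fps_ext => n /=; rewrite /sadd addrC. Qed.
Lemma fadd0 : left_id fzero fadd. Proof. by move=> a; apply: fps_ext => -[|n] /=; rewrite /sadd /= add0r. Qed.
Lemma faddN : left_inverse fzero fopp fadd. Proof. by move=> a; apply: fps_ext => -[|n] /=; rewrite /sadd /= addNr. Qed.
HB.instance Definition _ := GRing.isZmodule.Build fps faddA faddC fadd0 faddN.

Definition trunc (N : nat) (a : fps) : {poly int} := \poly_(i < N) coef a i.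
Definition agree (N : nat) (a : fps) (p : {poly int}) := forall n, (n < N)%N -> coef a n = p`_n.
Lemma agree_trunc N a : agree N a (trunc N a).
Proof. by move=> n Hn; rewrite coef_poly Hn. Qed.
Definition fmul (a b : fps) := FPS (smul (coef a) (coef b)).
Definition fone := FPS (sconst 1).
Lemma agree_mul N a b p q : agree N a p -> agree N b q -> agree N (fmul a b) (p * q).
Proof.
move=> Ha Hb n Hn; rewrite coefM /= /smul; apply: eq_bigr => i _.
have Hi : (i < N)%N by apply: leq_ltn_trans Hn; rewrite -ltnS.
rewrite Ha // Hb //; apply: leq_ltn_trans Hn; exact: leq_subr.
Qed.
Lemma agree_add N a b p q : agree N a p -> agree N b q -> agree N (a + b) (p + q).
Proof. by move=> Ha Hb n Hn; rewrite coefD -Ha // -Hb. Qed.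
Lemma agree_eq N a b p : agree N a p -> agree N b p -> forall n, (n < N)%N -> coef a n = coef b n.
Proof. by move=> Ha Hb n Hn; rewrite Ha // Hb. Qed.
Lemma agree_one N : agree N fone 1.
Proof. by move=> [|n] _; rewrite coef1. Qed.

Lemma fmulA : associative fmul.
Proof.
move=> a b c; apply: fps_ext => n.
apply: (@agree_eq n.+1 _ _ (trunc n.+1 a * (trunc n.+1 b * trunc n.+1 c))) => //.
  by apply: agree_mul; [apply: agree_trunc| apply: agree_mul; apply: agree_trunc].
by rewrite mulrA; apply: agree_mul; [apply: agree_mul; apply: agree_trunc| apply: agree_trunc].
Qed.
Lemma fmulC : commutative fmul.
Proof.
move=> a b; apply: fps_ext => n.
apply: (@agree_eq n.+1 _ _ (trunc n.+1 a * trunc n.+1 b)) => //.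
  by apply: agree_mul; apply: agree_trunc.
by rewrite mulrC; apply: agree_mul; apply: agree_trunc.
Qed.
Lemma fmul1 : left_id fone fmul.
Proof.
move=> a; apply: fps_ext => n.
apply: (@agree_eq n.+1 _ _ (1 * trunc n.+1 a)) => //.
  by apply: agree_mul; [apply: agree_one| apply: agree_trunc].
by rewrite mul1r; apply: agree_trunc.
Qed.
Lemma fmulDl : left_distributive fmul fadd.
Proof.
move=> a b c; apply: fps_ext => n.
apply: (@agree_eq n.+1 _ _ ((trunc n.+1 a + trunc n.+1 b) * trunc n.+1 c)) => //.
  by apply: agree_mul; [apply: (@agree_add _ a b)|]; apply: agree_trunc.
rewrite mulrDl; apply: (@agree_add _ (fmul a c) (fmul b c));
  by apply: agree_mul; apply: agree_trunc.
Qed.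
Lemma fone_neq0 : fone != 0.
Proof. apply/eqP => /(congr1 (fun a => coef a 0)) /=; by []. Qed.
HB.instance Definition _ := GRing.Zmodule_isComNzRing.Build fps fmulA fmulC fmul1 fmulDl fone_neq0.

Lemma coefM' (a b : fps) n : coef (a * b) n = \sum_(i < n.+1) coef a i * coef b (n - i).
Proof. by []. Qed.
Lemma agreeM N (a b : fps) p q : agree N a p -> agree N b q -> agree N (a * b) (p * q).
Proof. exact: agree_mul. Qed.
Lemma agreeD N (a b : fps) p q : agree N a p -> agree N b q -> agree N (a + b) (p + q).
Proof. exact: agree_add. Qed.
Lemma agree1 N : agree N 1 1. Proof. exact: agree_one. Qed.
Fixpoint enc (t : ctree) : GenTree.tree nat :=
  let: CNode c ch := t in GenTree.Node c (map enc ch).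
Fixpoint dec (t : GenTree.tree nat) : option ctree :=
  match t with
  | GenTree.Leaf _ => None
  | GenTree.Node c ts => Some (CNode c (pmap dec ts))
  end.
Fixpoint encK (t : ctree) : dec (enc t) = Some t :=
  match t return dec (enc t) = Some t with
  | CNode c ch => f_equal (fun l => Some (CNode c l))
      ((fix aux (l : seq ctree) : pmap dec (map enc l) = l :=
         match l return pmap dec (map enc l) = l with
         | [::] => erefl
         | u :: l' => eq_ind_r (fun o => oapp (cons^~ (pmap dec (map enc l'))) (pmap dec (map enc l')) o = u :: l')
                        (f_equal (cons u) (aux l') : oapp (cons^~ (pmap dec (map enc l'))) (pmap dec (map enc l')) (Some u) = u :: l') (encK u)
         end) ch)
  end.
HB.instance Definition _ := Countable.copy ctree (pcan_type encK).

Lemma sumn_big (l : seq nat) : sumn l = \sum_(x <- l) x.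
Proof. by elim: l => [|x l IH]; rewrite ?big_nil ?big_cons //= IH. Qed.



Fixpoint fo (fuel i s : nat) {struct fuel} : seq (seq ctree) :=
  match s, fuel with
  | 0, _ => [:: [::]]
  | _.+1, 0 => [::]
  | s'.+1, fuel'.+1 =>
    flatten [seq flatten [seq [seq CNode c fr1 :: fr2 | fr1 <- fo fuel' c a, fr2 <- fo fuel' i (s' - a)]
                         | a <- iota 0 s'.+1] | c <- iota 1 i]
  end.

Lemma fo_S fuel i s : fo fuel.+1 i s.+1 =
    flatten [seq flatten [seq [seq CNode c fr1 :: fr2 | fr1 <- fo fuel c a, fr2 <- fo fuel i (s - a)]
                         | a <- iota 0 s.+1] | c <- iota 1 i].
Proof. by []. Qed.

Lemma csize_gt0 U : (0 < csize U)%N. Proof. by case: U. Qed.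

Lemma fo_mem m fuel : forall i s fr, (i <= m)%N -> (s <= fuel)%N ->
  (fr \in fo fuel i s) =
  (all (fun U => (croot U <= i)%N && is_coloring m Bmat U) fr) && (sumn (map csize fr) == s).
Proof.
elim: fuel => [|fuel IH] i [|s] fr Him Hs //.
- rewrite /= inE; case: fr => [|U fr] //=; apply/esym/negbTE; rewrite negb_and; apply/orP; right.
  by have := csize_gt0 U; case: (csize U).
- rewrite /= inE; case: fr => [|U fr] //=; apply/esym/negbTE; rewrite negb_and; apply/orP; right.
  by have := csize_gt0 U; case: (csize U).
rewrite fo_S; apply/idP/idP.
- move=> /flatten_mapP [c]; rewrite mem_iota => /andP [c1 ci].
  move=> /flatten_mapP [a]; rewrite mem_iota add0n => /andP [_ aS].
  move=> /allpairsP [[fr1 fr2] /= [H1 H2 ->]].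
  rewrite IH in H1; [|lia|lia].
  rewrite IH in H2; [|lia|lia].
  move: H1 H2 => /andP [H1a /eqP H1b] /andP [H2a /eqP H2b] /=.
  rewrite H2a H1a andbT /=.
  apply/andP; split; first by apply/andP; split; lia.
  apply/eqP; rewrite H1b H2b; lia.
case: fr => [|[c fr1] fr2] H; rewrite /= in H; first by [].
move: H => /andP [/andP [/and3P [ci /andP [c0 cm] H1a] H2a] /eqP Hsum].
apply/flatten_mapP; exists c; first by rewrite mem_iota; lia.
apply/flatten_mapP; exists (sumn (map csize fr1)); first by rewrite mem_iota; lia.
apply/allpairsP; exists (fr1, fr2) => /=; split => //.
  by rewrite IH; [rewrite H1a eqxx | lia | lia].
by rewrite IH; [rewrite H2a; apply/eqP; lia | lia | lia].
Qed.

Lemma uniq_flatten_map (S T : eqType) (A : S -> seq T) (s : seq S) :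
  uniq s -> (forall x, x \in s -> uniq (A x)) ->
  (forall x y z, x \in s -> y \in s -> z \in A x -> z \in A y -> x = y) ->
  uniq (flatten [seq A x | x <- s]).
Proof.
elim: s => //= x s IH /andP [xs us] HA Hd.
rewrite cat_uniq HA ?mem_head // IH //; last first.
- by move=> a b z ai bi; apply: Hd; rewrite inE ?ai ?bi orbT.
- by move=> a ai; apply: HA; rewrite inE ai orbT.
rewrite andbT; apply/hasP => -[z /flatten_mapP [y ys zy] zx].
have exy := Hd x y z (mem_head _ _) (@mem_behead _ (x :: s) _ ys) zx zy.
by rewrite exy ys in xs.
Qed.

Lemma fo_uniq fuel : forall i s, (s <= fuel)%N -> uniq (fo fuel i s).
Proof.
elim: fuel => [|fuel IH] i [|s] // Hs.
rewrite fo_S; apply: uniq_flatten_map; first exact: iota_uniq.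
- move=> c _; apply: uniq_flatten_map; first exact: iota_uniq.
  + move=> a; rewrite mem_iota add0n => /andP [_ aS].
    apply: allpairs_uniq; rewrite ?IH //; try lia.
    by move=> [x1 y1] [x2 y2] _ _ /= [-> ->].
  + move=> a b z; rewrite !mem_iota !add0n => /andP [_ aS] /andP [_ bS].
    move=> /allpairsP [[fr1 fr2] /= [H1 _ ->]] /allpairsP [[fr1' fr2'] /= [H1' _ [E1 _]]].
    rewrite (@fo_mem c) in H1; [|by []|lia].
    rewrite (@fo_mem c) in H1'; [|by []|lia].
    move: H1 H1' => /andP [_ /eqP Ha] /andP [_ /eqP Hb]; by rewrite -Ha -Hb E1.
- move=> c d z _ _ H1 H2.
  case/flatten_mapP: H1 => a _ /allpairsP [[fr1 fr2] /= [_ _ E1]].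
  case/flatten_mapP: H2 => b _ /allpairsP [[fr1' fr2'] /= [_ _ E2]].
  by move: E2; rewrite E1 => -[].
Qed.

Definition hh (i s : nat) : nat := size (fo s i s).

Lemma fo_size fuel i s : (s <= fuel)%N -> size (fo fuel i s) = hh i s.
Proof.
move=> Hs; apply: perm_size; apply: uniq_perm; rewrite ?fo_uniq // => fr.
by rewrite (@fo_mem i) // (@fo_mem i).
Qed.

Lemma size_flatten_map (S T : Type) (A : S -> seq T) (s : seq S) :
  size (flatten [seq A x | x <- s]) = \sum_(x <- s) size (A x).
Proof. by elim: s => [|x s IH]; rewrite ?big_nil ?big_cons //= size_cat IH. Qed.

Lemma hh0 i : hh i 0 = 1%N. Proof. by []. Qed.
Lemma hhS i s : hh i s.+1 =
  (\sum_(c <- iota 1 i) \sum_(a <- iota 0 s.+1) hh c a * hh i (s - a))%N.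
Proof.
rewrite /hh fo_S size_flatten_map; apply: eq_bigr => c _.
rewrite size_flatten_map; apply: eq_big_seq => a; rewrite mem_iota add0n => /andP [_ aS].
by rewrite size_allpairs !fo_size //; lia.
Qed.

Definition trs (m n : nat) : seq ctree :=
  if n is n'.+1 then map (CNode m) (fo n' m n') else [::].

Lemma trs_mem m n T : (0 < m)%N ->
  T \in trs m n <-> [/\ is_coloring m Bmat T, croot T = m & csize T = n].
Proof.
move=> m0; case: n => [|n] /=.
  by split => // -[_ _ E]; move: (csize_gt0 T); rewrite E.
split.
  move=> /mapP [fr]; rewrite (@fo_mem m) // => /andP [Ha /eqP Hs] ->.
  by split => //=; rewrite ?Hs // m0 leqnn.
case: T => c ch /= [/andP [/andP [c0 cm] Ha] E [Hs]]; subst c.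
apply/mapP; exists ch => //; rewrite (@fo_mem m) //; apply/andP; split; [exact: Ha| by rewrite Hs].
Qed.

Lemma trs_uniq m n : uniq (trs m n).
Proof.
case: n => [|n] //=; rewrite map_inj_uniq ?fo_uniq //.
by move=> x y [].
Qed.

Lemma trs_size m n : size (trs m n) = if n is n'.+1 then hh m n' else 0%N.
Proof. by case: n => [|n] //=; rewrite size_map. Qed.

Lemma has_card_size (P : ctree -> Prop) k l : has_card P k -> uniq l ->
  (forall x, P x <-> x \in l) -> k = size l.
Proof.
move=> [g [ginj Hg]] ul Hl.
have <- : size (map g (enum 'I_k)) = k by rewrite size_map size_enum_ord.
apply: perm_size; apply: uniq_perm => //.
  by rewrite map_inj_uniq ?enum_uniq.
move=> x; apply/idP/idP.
  by move=> /mapP [i _ ->]; apply/Hl/Hg; exists i.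
by move=> /Hl /Hg [i <-]; apply: map_f; rewrite mem_enum.
Qed.

Lemma f_eq m (f : nat -> nat) : (0 < m)%N -> (forall n, t_count m Bmat m n (f n)) ->
  forall n, f n = if n is n'.+1 then hh m n' else 0%N.
Proof.
move=> m0 Hf n; rewrite -trs_size; apply: has_card_size (Hf n) (trs_uniq m n) _.
by move=> T; rewrite trs_mem.
Qed.

Lemma coefD' (a b : fps) n : coef (a + b) n = coef a n + coef b n. Proof. by []. Qed.
Lemma coefN' (a : fps) n : coef (- a) n = - coef a n. Proof. by []. Qed.
Lemma coef1' n : coef 1 n = if n is 0 then 1 else 0. Proof. by []. Qed.
Lemma coef0' n : coef 0 n = 0. Proof. by case: n. Qed.
Definition X : fps := FPS svar.

Lemma coef_sum (I : Type) (l : seq I) (F : I -> fps) n :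
  coef (\sum_(c <- l) F c) n = \sum_(c <- l) coef (F c) n.
Proof. elim: l => [|x l IH]; first by rewrite !big_nil; case: n. by rewrite !big_cons /= /sadd IH. Qed.

Lemma agreeX N : agree N X 'X.
Proof. by move=> [|[|n]] _; rewrite coefX. Qed.

Lemma coef_XM (b : fps) n : coef (X * b) n = if n is n'.+1 then coef b n' else 0.
Proof.
rewrite (agreeM (@agreeX n.+1) (@agree_trunc n.+1 b)) // coefXM.
case: n => [|n] //=; rewrite coef_poly; case: ltnP => //; lia.
Qed.

Lemma X_cancel (a b : fps) : X * a = X * b -> a = b.
Proof. by move=> E; apply: fps_ext => n; have := congr1 (fun c => coef c n.+1) E; rewrite !coef_XM. Qed.

Lemma natZ_sum (I : Type) (l : seq I) (F : I -> nat) :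
  ((\sum_(c <- l) F c)%N)%:Z = \sum_(c <- l) (F c)%:Z.
Proof. elim: l => [|x l IH]; first by rewrite !big_nil. by rewrite !big_cons PoszD IH. Qed.

Definition Hs (i : nat) : fps := FPS (fun s => (hh i s)%:Z).
Definition Gs (i : nat) : fps := FPS (fun n => if n is n'.+1 then (hh i n')%:Z else 0).
Definition Ss (i : nat) : fps := \sum_(c <- iota 1 i) Gs c.

Lemma Gs_XH i : Gs i = X * Hs i.
Proof. by apply: fps_ext => n; rewrite coef_XM; case: n. Qed.

Lemma Hs_eq i : Hs i = 1 + Ss i * Hs i.
Proof.
apply: fps_ext => -[|s].
  rewrite coefD' coef1' coefM' big_ord1 /Ss coef_sum big1 ?mul0r ?addr0 //.
rewrite coefD' coef1' add0r /Ss mulr_suml coef_sum.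
have -> : coef (Hs i) s.+1 = (hh i s.+1)%:Z by [].
rewrite hhS natZ_sum; apply: eq_bigr => c _.
rewrite coefM' big_ord_recl mul0r add0r natZ_sum.
rewrite -(subn0 s.+1) -/(index_iota 0 s.+1) big_mkord subn0.
apply: eq_bigr => a _; rewrite PoszM /bump /=; congr (_ * _).
Qed.

Definition Gp (i : nat) : fps := if i is 0 then X else Gs i.

Lemma Gp_eq i : Gp i = X + Ss i * Gp i.
Proof.
case: i => [|i] /=; first by rewrite /Ss big_nil mul0r addr0.
rewrite Gs_XH {1}Hs_eq; ring.
Qed.

Lemma Ss_S i : Ss i.+1 = Ss i + Gp i.+1.
Proof.
rewrite /Ss; have -> : iota 1 i.+1 = iota 1 i ++ [:: i.+1] by rewrite -(addn1 i) iotaD addn1 add1n.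
by rewrite big_cat big_seq1.
Qed.

Lemma alg1 (R : comNzRingType) (x a b s : R) :
  a = x + s * a -> b = x + (s + b) * b -> x * b = a * (x + b ^+ 2).
Proof.
move=> hA hB; apply/eqP; rewrite -subr_eq0.
have -> : x * b - a * (x + b ^+ 2) = b * (x + s * a - a) - a * (x + (s + b) * b - b) by ring.
by rewrite -hA -hB !subrr !mulr0 subrr.
Qed.

Lemma Gp_rel i : X * Gp i.+1 = Gp i * (X + Gp i.+1 ^+ 2).
Proof. by apply: (alg1 (s := Ss i)); [apply: Gp_eq | rewrite -Ss_S; apply: Gp_eq]. Qed.

Definition sig (a : fps) : fps := FPS (fun k => if odd k then 0 else coef a k./2).

Lemma agree_sig N a p : agree N a p -> agree N.*2 (sig a) (p \Po 'X^2).
Proof.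
move=> Ha n Hn; rewrite coef_comp_poly_Xn // dvdn2 /=; case: (odd n) => //=.
by rewrite divn2 Ha // ltn_half_double.
Qed.

Lemma sigM a b : sig (a * b) = sig a * sig b.
Proof.
apply: fps_ext => n.
have Hn : (n < n.+1.*2)%N by rewrite -addnn; lia.
apply: (@agree_eq n.+1.*2 _ _ ((trunc n.+1 a * trunc n.+1 b) \Po 'X^2)) => //.
  by apply: agree_sig; apply: agreeM; apply: agree_trunc.
by rewrite comp_polyM; apply: agreeM; apply: agree_sig; apply: agree_trunc.
Qed.

Lemma sigD a b : sig (a + b) = sig a + sig b.
Proof. by apply: fps_ext => n; rewrite /= /sadd; case: (odd n); rewrite ?addr0. Qed.

Lemma sigX : sig X = X ^+ 2.
Proof.
apply: fps_ext => n.
apply: (@agree_eq n.+1.*2 _ _ ('X \Po 'X^2)).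
- by apply: agree_sig; apply: agreeX.
- by rewrite comp_polyX expr2 -expr2; rewrite expr2; apply: agreeM; apply: agreeX.
- by rewrite -addnn; lia.
Qed.

Definition dv (a : fps) : fps := FPS (fun k => coef a k.+1).
Lemma dvK a : coef a 0 = 0 -> a = X * dv a.
Proof. by move=> H; apply: fps_ext => -[|n]; rewrite coef_XM. Qed.

Definition vv (i : nat) : fps := dv (sig (Gp i)).

Lemma sigGp i : sig (Gp i) = X * vv i.
Proof. by apply: dvK; case: i. Qed.

Lemma vv0 : vv 0 = X.
Proof. rewrite /vv /= sigX expr2; apply: fps_ext => n; change (coef (X * X) n.+1 = coef X n); by rewrite coef_XM. Qed.

Lemma vv_rel i : vv i.+1 = vv i * (1 + vv i.+1 ^+ 2).
Proof.
have := congr1 sig (Gp_rel i); rewrite !sigM sigD sigM sigX !sigGp => E.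
apply: X_cancel; apply: X_cancel; apply: X_cancel.
rewrite expr2 in E; rewrite expr2.
transitivity (X * X * (X * vv i.+1)); first by ring.
by rewrite E; ring.
Qed.

Definition ev (p : {poly int}) (s : fps) : fps := (map_poly intr p).[s].

Lemma evM p q s : ev (p * q) s = ev p s * ev q s.
Proof. by rewrite /ev rmorphM hornerM. Qed.
Lemma evD p q s : ev (p + q) s = ev p s + ev q s.
Proof. by rewrite /ev rmorphD hornerD. Qed.
Lemma evX s : ev 'X s = s.
Proof. by rewrite /ev map_polyX hornerX. Qed.
Lemma ev1 s : ev 1 s = 1.
Proof. by rewrite /ev rmorph1 hornerC. Qed.

Lemma evXn p n s : ev (p ^+ n) s = ev p s ^+ n.
Proof. by rewrite /ev rmorphXn horner_exp. Qed.

Lemma alg2 (R : comNzRingType) (P Q v1 v2 : R) :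
  Q = v1 * P -> v1 = v2 * (1 + v1 ^+ 2) -> P * Q = v2 * (P ^+ 2 + Q ^+ 2).
Proof.
move=> -> hv; apply/eqP; rewrite -subr_eq0.
have -> : P * (v1 * P) - v2 * (P ^+ 2 + (v1 * P) ^+ 2) = P ^+ 2 * (v1 - v2 * (1 + v1 ^+ 2)) by ring.
by rewrite -hv subrr mulr0.
Qed.

Lemma PQ_S k : PQ k.+1 = (((PQ k).1) ^+ 2 + ((PQ k).2) ^+ 2, (PQ k).1 * (PQ k).2).
Proof. by rewrite /=; case: (PQ k). Qed.

Lemma PQ_ind m j : (j < m)%N ->
  ev (PQ j.+1).2 (vv m) = vv (m - j.+1) * ev (PQ j.+1).1 (vv m).
Proof.
elim: j => [|j IH] Hj.
  rewrite /= mulr1 evD !evXn evX ev1 expr1n.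
  have {1}-> : m = (m - 1).+1 by lia.
  rewrite vv_rel; congr (_ * _); rewrite addrC; congr (_ + _); congr (_ ^+ 2); congr vv; lia.
have := IH (ltnW Hj).
rewrite (PQ_S j.+1) /= => E.
rewrite evM evD !evXn.
refine (alg2 E _).
have HH : (m - j.+1 = (m - j.+2).+1)%N by lia.
rewrite HH; exact: vv_rel.
Qed.

Lemma cstn (n : nat) : (n%:R : fps) = FPS (sconst n%:Z).
Proof.
elim: n => [|n IH]; first by apply: fps_ext => -[|k].
rewrite mulrS IH; apply: fps_ext => -[|k] //=; rewrite /sadd /=; try lia.
Qed.

Lemma cst (c : int) : (c%:~R : fps) = FPS (sconst c).
Proof.
case: c => [n|n]; first by rewrite -pmulrn cstn.
rewrite NegzE mulrNz -pmulrn cstn; apply: fps_ext => -[|k] //=; rewrite ?oppr0.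
Qed.

Lemma foldr_sum (S : fps) (l : seq int) :
  foldr (fun c acc => c%:~R + S * acc) 0 l = \sum_(i < size l) (l`_i)%:~R * S ^+ i.
Proof.
elim: l => [|c l IH] /=; first by rewrite big_ord0.
rewrite big_ord_recl /= expr0 mulr1 IH mulr_sumr; congr (_ + _).
by apply: eq_bigr => i _; rewrite exprS /bump /=; ring.
Qed.

Lemma intr_inj_fps : injective (fun c : int => (c%:~R : fps)).
Proof. by move=> c d; rewrite !cst => /(congr1 (fun a => coef a 0)). Qed.

Lemma FPS_seval p s : FPS (seval p s) = ev p (FPS s).
Proof.
rewrite /ev horner_coef size_map_inj_poly //; last exact: intr_inj_fps.
have -> : FPS (seval p s) = foldr (fun c acc => c%:~R + FPS s * acc) 0 (polyseq p).
  rewrite /seval; elim: (polyseq p) => [|c l IH] /=; first by [].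
  by rewrite -IH cst.
rewrite foldr_sum; apply: eq_bigr => i _; by rewrite coef_map.
Qed.

Lemma FPS_spow e : FPS (spow svar e) = X ^+ e.
Proof. elim: e => [|e IH]; first by []. by rewrite exprS -IH. Qed.

Theorem theorem43 (m : nat) (f : nat -> nat) :
  (0 < m)%N ->
  (forall n : nat, t_count m Bmat m n (f n)) ->
  forall k : nat,
    ssub (smul (spow svar (2 ^ m).-1) (seval (Qpoly m.+1) (div_t (sub_sq f))))
         (smul (spow svar (2 ^ m)) (seval (Ppoly m.+1) (div_t (sub_sq f)))) k = 0.
Proof.
move=> m0 Hf k.
have Hsub : FPS (div_t (sub_sq f)) = vv m.
  rewrite /vv; have -> : Gp m = Gs m by move: m0; case: (m).
  apply: fps_ext => n.
  change ((if odd n.+1 then 0 else (f n.+1./2)%:Z) = if odd n.+1 then 0 else coef (Gs m) n.+1./2).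
  rewrite (f_eq m0 Hf); case: (odd n.+1) => //; by case: (n.+1)./2.
change (coef (FPS (spow svar (2 ^ m).-1) * FPS (seval (Qpoly m.+1) (div_t (sub_sq f)))
   - FPS (spow svar (2 ^ m)) * FPS (seval (Ppoly m.+1) (div_t (sub_sq f)))) k = 0).
have key : ev (Qpoly m.+1) (vv m) = X * ev (Ppoly m.+1) (vv m).
  have := @PQ_ind m m.-1; rewrite prednK // subnn vv0 => H; apply: H; lia.
rewrite !FPS_seval !FPS_spow Hsub key.
have He : (2 ^ m = (2 ^ m).-1.+1)%N by rewrite prednK // expn_gt0.
rewrite {2}He exprS.
have -> : X ^+ (2 ^ m).-1 * (X * ev (Ppoly m.+1) (vv m)) -
          X * X ^+ (2 ^ m).-1 * ev (Ppoly m.+1) (vv m) = 0 by ring.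
exact: coef0'.
Qed.
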